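(* Let $(S,* )$ be a finite cycle set of size $n$ and class $d$, with structure group $G$, germ $\overline G$, permutation group $\mathcal G$ and diagonal map $T$. Then: (i) the map $\psi\colon G\to\mathcal G$ factorizes through the projection $\pi\colon G\to\overline G$, i.e. there is a map $\phi\colon\overline G\to\mathcal G$ with $\psi=\phi\circ\pi$; (ii) $o(T)$ divides $d$, $d$ divides $|\mathcal G|$, and $|\mathcal G|$ divides $d^n$, where $o(T)$ is the order of the permutation $T$ of $S$.
   Context: A cycle set is a set $S$ with a binary operation $*$ such that each $t\mapsto s*t$ is bijective and $(s*t)*(s*u)=(t*s)*(t*u)$ for all $s,t,u$. Write $S=\{s_1,\dots,s_n\}$, let $\psi(s)\in\mathfrak S_n$ satisfy $s_i*s_j=s_{\psi(s_i)(j)}$, and $T(s)=s*s$ (a bijection of $S$ for finite cycle sets). The structure group $G$ has presentation $\langle S\mid s(s*t)=t(t*s),\ s\ne t\rangle$; $\psi$ extends to the anti-homomorphism $\psi\colon G\to\mathfrak S_n$ with $\psi(gh)=\psi(h)\circ\psi(g)$, whose image is the permutation group $\mathcal G=\langle\psi(s_1),\dots,\psi(s_n)\rangle$. With $\psi_k(s)=\psi(T^{k-1}(s))\circ\cdots\circ\psi(s)$, the class $d$ is the least $d\ge1$ with $\psi_d(s)=\mathrm{id}$ for all $s$. With $P_\sigma$ the matrix having $1$ at $(i,\sigma(i))$ and $\zeta_d=e^{2i\pi/d}$, the germ $\overline G$ is the subgroup of $GL_n(\mathbb C)$ generated by $\bar s_i=\mathrm{diag}(1,\dots,\zeta_d,\dots,1)P_{\psi(s_i)}$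 ($\zeta_d$ in position $i$), and $\pi\colon G\to\overline G$ is the surjective homomorphism $s_i\mapsto\bar s_i$. *)

(* Defs.v *)
From HB Require Import structures.
From mathcomp Require Import all_boot all_order all_algebra all_fingroup all_field.
Set Implicit Arguments. Unset Strict Implicit. Unset Printing Implicit Defensive.
Import GRing.Theory Num.Theory.
Local Open Scope ring_scope.
Local Open Scope group_scope.

(* A cycle set on S = 'I_n is encoded by psi : 'I_n -> {perm 'I_n}, with
   s_i * s_j = s_(psi s_i j).  Bijectivity of t |-> s * t is built in. *)
Definition cs_op (n : nat) (psi : 'I_n -> {perm 'I_n}) (s t : 'I_n) : 'I_n :=
  psi s t.

Definition is_cycle_set (n : nat) (psi : 'I_n -> {perm 'I_n}) : Prop :=
  forall s t u : 'I_n,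
    cs_op psi (cs_op psi s t) (cs_op psi s u) = cs_op psi (cs_op psi t s) (cs_op psi t u).

Definition diagT (n : nat) (psi : 'I_n -> {perm 'I_n}) (s : 'I_n) : 'I_n :=
  cs_op psi s s.

(* psi_k(s) = psi(T^{k-1} s) o ... o psi(s).  In mathcomp, (p * q) x = q (p x),
   i.e. p * q is "q after p", so this is the product psi(s) * psi(T s) * ... *)
Definition psik (n : nat) (psi : 'I_n -> {perm 'I_n}) (k : nat) (s : 'I_n)
  : {perm 'I_n} :=
  \prod_(i < k) psi (iter i (diagT psi) s).

Definition is_class (n : nat) (psi : 'I_n -> {perm 'I_n}) (d : nat) : Prop :=
  (0 < d)%N /\ (forall s, psik psi d s = 1) /\
  (forall d', (0 < d')%N -> (d' < d)%N -> exists s, psik psi d' s != 1).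

Definition permGroup (n : nat) (psi : 'I_n -> {perm 'I_n}) : {group {perm 'I_n}} :=
  <<[set psi s | s : 'I_n]>>%G.

(* Elements of the structure group G are represented by words in the
   generators s_i and their inverses: (i, true) = s_i, (i, false) = s_i^-1. *)
Definition word (n : nat) := seq ('I_n * bool).

(* psi : G -> calG (anti-homomorphism for composition, i.e. a homomorphism
   for mathcomp's left-to-right product). *)
Definition psiW (n : nat) (psi : 'I_n -> {perm 'I_n}) (w : word n) : {perm 'I_n} :=
  foldr (fun x acc => (if x.2 then psi x.1 else (psi x.1)^-1) * acc) 1 w.

Definition Pmx (n : nat) (sigma : {perm 'I_n}) : 'M[algC]_n :=
  \matrix_(i, j) (if j == sigma i then 1 else 0)%R.

Definition germGen (n : nat) (psi : 'I_n -> {perm 'I_n}) (z : algC) (i : 'I_n)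
  : 'M[algC]_n :=
  (diag_mx (\row_(j < n) (if j == i then z else 1%R)) *m Pmx (psi i))%R.

Definition piW (n : nat) (psi : 'I_n -> {perm 'I_n}) (z : algC) (w : word n)
  : 'M[algC]_n :=
  foldr (fun x acc =>
           ((if x.2 then germGen psi z x.1 else invmx (germGen psi z x.1)) *m acc)%R)
        (1%:M)%R w.

(* Main.v *)
Require Import Defs.
From HB Require Import structures.
From mathcomp Require Import all_boot all_order all_algebra all_fingroup all_field.
From mathcomp Require Import zify.
From mathcomp Require Import cyclic.
Import GRing.Theory Num.Theory.
Set Implicit Arguments. Unset Strict Implicit. Unset Printing Implicit Defensive.

Section Words.
Variables (n : nat) (psi : 'I_n -> {perm 'I_n}).
Hypothesis Hcs : is_cycle_set psi.
Local Open Scope group_scope.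

Definition vw (w : seq 'I_n) : {ffun 'I_n -> nat} :=
  foldr (fun j (c : {ffun 'I_n -> nat}) => [ffun i => ((i == j) : nat) + c (psi j i)]%N) [ffun => 0%N] w.
Definition pw (w : seq 'I_n) : {perm 'I_n} := foldr (fun j p => psi j * p) 1 w.

Lemma vw_cons j w i : vw (j :: w) i = ((i == j) : nat) + vw w (psi j i).
Proof. by rewrite /= ffunE. Qed.
Lemma pw_cons j w : pw (j :: w) = psi j * pw w.
Proof. by []. Qed.

Lemma vw_cat w r i : vw (w ++ r) i = (vw w i + vw r (pw w i))%N.
Proof.
elim: w i => [|j w IH] i /=; first by rewrite !ffunE perm1.
by rewrite !ffunE IH permM addnA.
Qed.
Lemma pw_cat w r : pw (w ++ r) = pw w * pw r.
Proof. by elim: w => [|j w IH] /=; rewrite ?mul1g // IH mulgA. Qed.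

Lemma sum_eq1 (j : 'I_n) : (\sum_(i < n) ((i == j) : nat))%N = 1%N.
Proof. by rewrite (bigD1 j) //= eqxx big1 // => i /negbTE ->. Qed.

Lemma sum_perm (c : 'I_n -> nat) (p : {perm 'I_n}) :
  (\sum_(i < n) c (p i))%N = (\sum_(i < n) c i)%N.
Proof. by rewrite [RHS](reindex_inj (@perm_inj _ p)). Qed.

Lemma size_vw w : (\sum_(i < n) vw w i)%N = size w.
Proof.
elim: w => [|j w IH] /=; first by apply: big1 => i _; rewrite ffunE.
under eq_bigr => i _ do rewrite ffunE.
by rewrite big_split /= sum_eq1 sum_perm IH add1n.
Qed.

Lemma cycle_perm x x' : psi x * psi (psi x x') = psi x' * psi (psi x' x).
Proof. by apply/permP => u; rewrite !permM; apply: Hcs. Qed.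

Definition shift (c : {ffun 'I_n -> nat}) j : {ffun 'I_n -> nat} :=
  [ffun i => c ((psi j)^-1 i) - (((psi j)^-1 i == j) : nat)]%N.

Lemma cons_shift (c : {ffun 'I_n -> nat}) j r : (0 < c j)%N -> vw r = shift c j -> vw (j :: r) = c.
Proof.
move=> cj Hr; apply/ffunP => i; rewrite vw_cons Hr ffunE permK.
by case: eqP => [->|_]; rewrite ?subn0 // add1n subn1 prednK.
Qed.

Lemma sum_shift (c : {ffun 'I_n -> nat}) j : (0 < c j)%N ->
  (\sum_(i < n) shift c j i).+1 = (\sum_(i < n) c i)%N.
Proof.
move=> cj.
have -> : (\sum_(i < n) shift c j i = \sum_(i < n) (c i - ((i == j) : nat)))%N.
  rewrite -(sum_perm (fun k => c k - ((k == j) : nat))%N (psi j)^-1).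
  by apply: eq_bigr => i _; rewrite ffunE.
rewrite (bigD1 j) //= [in RHS](bigD1 j) //= eqxx subn1 -addSn prednK //.
by congr (_ + _)%N; apply: eq_bigr => i /negbTE ->; rewrite subn0.
Qed.

Lemma ex_word (c : {ffun 'I_n -> nat}) : exists w, vw w = c.
Proof.
move: {2}(\sum_(i < n) c i)%N (erefl (\sum_(i < n) c i)%N) => k.
elim: k c => [|k IH] c Hc.
  exists [::]; apply/ffunP => i; rewrite ffunE; apply/esym/eqP.
  by rewrite -leqn0 -Hc (bigD1 i) //= leq_addr.
have [j cj] : exists j, (0 < c j)%N.
  apply/existsP; apply: contraT; rewrite negb_exists => /forallP H.
  move: Hc; rewrite big1 // => i _; apply/eqP; rewrite -leqn0 leqNgt; exact: H.
have [r Hr] : exists r, vw r = shift c j.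
  by apply: IH; apply: succn_inj; rewrite sum_shift.
by exists (j :: r); apply: cons_shift.
Qed.

Lemma ex_word_head (c : {ffun 'I_n -> nat}) j : (0 < c j)%N -> exists r, vw (j :: r) = c.
Proof.
move=> cj; have [r Hr] := ex_word (shift c j).
by exists r; apply: cons_shift.
Qed.

Lemma vw_nil_pos x w : (0 < vw (x :: w) x)%N.
Proof. by rewrite vw_cons eqxx. Qed.

Lemma vw_eq_perm (a b : {ffun 'I_n -> nat}) (p : {perm 'I_n}) :
  (forall i, a (p i) = b (p i)) -> a = b.
Proof. by move=> H; apply/ffunP => i; rewrite -(permKV p i) H. Qed.

Lemma confl k : forall w w', (size w <= k)%N -> vw w = vw w' -> pw w = pw w'.
Proof.
elim: k => [|k IH] w w'.
  case: w => // _; case: w' => // x u' /ffunP /(_ x).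
  by rewrite vw_cons eqxx ffunE.
case: w => [|x u]; case: w' => [|x' u'] //.
- by move=> _ /ffunP /(_ x'); rewrite vw_cons eqxx ffunE.
- by move=> _ /ffunP /(_ x); rewrite vw_cons eqxx ffunE.
rewrite ltnS => Hu Hv.
have {}Hu : (size u <= k)%N by [].
have Hs : size (x' :: u') = size (x :: u) by rewrite -!size_vw Hv.
case: (eqVneq x x') => [E|nx].
  subst x'.
  rewrite !pw_cons; congr (_ * _); apply: IH => //.
  apply: (@vw_eq_perm _ _ (psi x)) => i.
  by move/ffunP: Hv => /(_ i); rewrite !vw_cons => /addnI.
have [r Hr] : exists r, vw (psi x x' :: r) = vw u.
  apply: ex_word_head; move/ffunP: Hv => /(_ x'); rewrite !vw_cons eqxx.
  by rewrite eq_sym (negbTE nx) add0n => ->.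
have [r' Hr'] : exists r', vw (psi x' x :: r') = vw u'.
  apply: ex_word_head; move/ffunP: Hv => /(_ x); rewrite !vw_cons eqxx.
  by rewrite (negbTE nx) add0n => <-.
have E1 : pw u = pw (psi x x' :: r) by apply: IH => //; rewrite Hr.
have E2 : pw u' = pw (psi x' x :: r').
  apply: IH; last by rewrite Hr'.
  by move: Hs Hu => /= [->].
have Hrr : vw r = vw r'.
  apply: (@vw_eq_perm _ _ (psi x * psi (psi x x'))) => i.
  move/ffunP: Hv => /(_ i); rewrite !vw_cons -Hr -Hr' !vw_cons.
  rewrite !permM.
  have -> : (psi x i == psi x x') = (i == x') by rewrite (inj_eq perm_inj).
  have -> : (psi x' i == psi x' x) = (i == x) by rewrite (inj_eq perm_inj).
  have -> : psi (psi x' x) (psi x' i) = psi (psi x x') (psi x i).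
    by rewrite -!permM cycle_perm.
  by move=> /eqP; rewrite addnCA eqn_add2l eqn_add2l => /eqP.
have Er : pw r = pw r'.
  apply: IH => //.
  have Hsz : size (psi x x' :: r) = size u by rewrite -!size_vw Hr.
  by apply: leq_trans Hu; rewrite -Hsz /= leqnSn.
by rewrite !pw_cons E1 E2 !pw_cons !mulgA cycle_perm Er.
Qed.


Fixpoint Wk k s := if k is k'.+1 then s :: Wk k' (diagT psi s) else [::].

Lemma vw_Wk k s : vw (Wk k s) = [ffun i => (k * (i == s))%N].
Proof.
elim: k s => [|k IH] s; apply/ffunP => i; first by rewrite !ffunE.
rewrite [Wk _ _]/= vw_cons IH !ffunE /diagT /cs_op.
by rewrite (inj_eq perm_inj) mulSn.
Qed.

Lemma pw_Wk k s : pw (Wk k s) = psik psi k s.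
Proof.
elim: k s => [|k IH] s; first by rewrite /psik big_ord0.
rewrite /psik big_ord_recl [Wk _ _]/= pw_cons IH /psik.
by congr (_ * _); apply: eq_bigr => i _; rewrite iterSr.
Qed.

Lemma ex_wordb (c : {ffun 'I_n -> nat}) : exists w, vw w == c.
Proof. by have [w Hw] := ex_word c; exists w; apply/eqP. Qed.

Definition Pw (c : {ffun 'I_n -> nat}) := pw (xchoose (ex_wordb c)).

Lemma Pw_vw w : Pw (vw w) = pw w.
Proof.
rewrite /Pw; have /eqP H0 := xchooseP (ex_wordb (vw w)).
apply: (confl (k := size (xchoose (ex_wordb (vw w))))); [exact: leqnn| exact: H0].
Qed.

Lemma Pw_pw (c : {ffun 'I_n -> nat}) : exists w, vw w = c /\ Pw c = pw w.
Proof. by have [w <-] := ex_word c; exists w; rewrite Pw_vw. Qed.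

End Words.

Section Main.
Variables (n : nat) (psi : 'I_n -> {perm 'I_n}) (d' : nat).
Hypothesis Hcs : is_cycle_set psi.
Local Notation m := d'.+2.
Hypothesis Hcl : forall s, psik psi m s = 1%g.
Local Open Scope group_scope.

Local Notation vw := (vw psi).
Local Notation pw := (pw psi).
Local Notation Pw := (Pw psi).

Lemma Pw_add (c : {ffun 'I_n -> nat}) s :
  Pw [ffun i => c i + m * (i == s)]%N = Pw c.
Proof.
have [r [Hr ->]] := Pw_pw Hcs c.
have -> : [ffun i => c i + m * (i == s)]%N = vw (Wk psi m s ++ r).
  apply/ffunP => i; rewrite vw_cat vw_Wk pw_Wk Hcl perm1 !ffunE Hr addnC.
  by [].
by rewrite (Pw_vw Hcs) pw_cat pw_Wk Hcl mul1g.
Qed.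

Lemma Pw_mod (c : {ffun 'I_n -> nat}) : Pw [ffun i => c i %% m]%N = Pw c.
Proof.
move: {2}(\sum_(i < n) c i)%N (leqnn (\sum_(i < n) c i)%N) => k.
elim: k c => [|k IH] c Hc.
  congr Pw; apply/ffunP => i; rewrite ffunE modn_small //.
  suff -> : c i = 0%N by [].
  by apply/eqP; rewrite -leqn0; apply: leq_trans Hc; rewrite (bigD1 i) //= leq_addr.
case: (pickP (fun s => m <= c s)%N) => [s Hs|H]; last first.
  congr Pw; apply/ffunP => i; rewrite ffunE modn_small //.
  by rewrite ltnNge H.
pose c' := [ffun i => c i - m * (i == s)]%N.
have Ec : c = [ffun i => c' i + m * (i == s)]%N.
  apply/ffunP => i; rewrite !ffunE; case: eqP => [->|_]; last by rewrite muln0 addn0 subn0.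
  by rewrite muln1 subnK.
have Es : (\sum_(i < n) c i)%N = (\sum_(i < n) c' i + m)%N.
  rewrite [in LHS]Ec.
  rewrite (eq_bigr (fun i => c' i + m * (i == s))%N); last by move=> i _; rewrite ffunE.
  rewrite big_split /=; congr (_ + _)%N.
  by rewrite -big_distrr /= sum_eq1 muln1.
rewrite [in RHS]Ec Pw_add -(IH c'); last first.
  move: Hc; rewrite Es; move: (\sum_(i < n) c' i)%N => t; lia.
congr Pw; apply/ffunP => i; rewrite !ffunE; case: eqP => [->|_].
  by rewrite /= muln1 -[in LHS](subnK Hs) modnDr.
by rewrite /= muln0 subn0.
Qed.


Local Notation V := 'rV['Z_m]_n.
Definition lift (a : V) : {ffun 'I_n -> nat} := [ffun i => (a ord0 i : nat)].
Definition red (c : {ffun 'I_n -> nat}) : V := \row_i inZp (c i).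
Definition F (a : V) := Pw (lift a).

Lemma lift_red c i : lift (red c) i = (c i %% m)%N.
Proof. by rewrite !ffunE mxE. Qed.

Lemma lift_lt a i : (lift a i < m)%N.
Proof. by rewrite ffunE. Qed.

Lemma red_lift a : red (lift a) = a.
Proof. by apply/rowP => i; apply: val_inj; rewrite mxE /= ffunE modn_small. Qed.

Lemma F_red c : F (red c) = Pw c.
Proof.
rewrite /F -[RHS]Pw_mod; congr Pw; apply/ffunP => i.
by rewrite lift_red ffunE.
Qed.

Lemma F_vw w : F (red (vw w)) = pw w.
Proof. by rewrite F_red (Pw_vw Hcs). Qed.

Definition circ (a k : V) : V := red [ffun i => lift a i + lift k (F a i)]%N.

Lemma F_circ a k : F (circ a k) = F a * F k.
Proof.
have [w [Hw Fw]] := Pw_pw Hcs (lift a).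
have [r [Hr Fr]] := Pw_pw Hcs (lift k).
have E : [ffun i => lift a i + lift k (F a i)]%N = vw (w ++ r).
  by apply/ffunP => i; rewrite vw_cat Hw Hr /F Fw ffunE.
by rewrite /circ E F_vw pw_cat /F Fw Fr.
Qed.

Lemma pw_in w : pw w \in permGroup psi.
Proof.
elim: w => [|j w IH] /=; first exact: group1.
rewrite groupM //; apply: mem_gen; exact: imset_f.
Qed.

Lemma F_in a : F a \in permGroup psi.
Proof. by rewrite /F; have [w [_ ->]] := Pw_pw Hcs (lift a); exact: pw_in. Qed.

Lemma F_surj g : g \in permGroup psi -> exists a, F a = g.
Proof.
have gI : group_set [set F a | a : V].
  apply/group_setP; split.
    by apply/imsetP; exists (red (vw [::])) => //; rewrite F_vw.
  move=> x y /imsetP [a _ ->] /imsetP [b _ ->].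
  by apply/imsetP; exists (circ a b) => //; rewrite F_circ.
have sub : permGroup psi \subset Group gI.
  rewrite /permGroup gen_subG; apply/subsetP => x /imsetP [s _ ->].
  apply/imsetP; exists (red (vw [:: s])) => //.
  by rewrite F_vw /= mulg1.
by move=> Hg; have /imsetP [a _ ->] := subsetP sub g Hg; exists a.
Qed.

Definition Ker : {set V} := [set a : V | F a == 1].

Lemma circ_inj a : injective (circ a).
Proof.
move=> k1 k2 E.
suff H : lift k1 = lift k2 by rewrite -(red_lift k1) H red_lift.
apply: (@vw_eq_perm n (lift k1) (lift k2) (F a)) => i.
move/rowP: E => /(_ i) /(congr1 val); rewrite /= !mxE /= !ffunE.
move/eqP; rewrite eqn_modDl => /eqP.
by rewrite !modn_small // -(ffunE (fun i => (_ : nat))) ?lift_lt.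
Qed.

Lemma fiber a : [set b | F b == F a] = circ a @: Ker.
Proof.
apply/setP => b; rewrite inE; apply/eqP/imsetP => [Hb|[k]]; last first.
  by rewrite inE => /eqP Hk ->; rewrite F_circ Hk mulg1.
pose k := red [ffun j => lift b ((F a)^-1 j) + (m - lift a ((F a)^-1 j))]%N.
have Eb : b = circ a k.
  apply/rowP => i; apply: val_inj; rewrite /circ /k /=.
  rewrite !mxE !ffunE /= mxE ffunE permK modnDmr.
  have ha : (a ord0 i < m)%N := ltn_ord (a ord0 i).
  have hb : (b ord0 i < m)%N := ltn_ord (b ord0 i).
  rewrite !ffunE; change (b 0%R i : nat) with (b ord0 i : nat).
  have -> : (a ord0 i + (b ord0 i + (m - a ord0 i)) = b ord0 i + m)%N by lia.
  by rewrite modnDr modn_small.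
exists k => //; rewrite inE; apply/eqP.
by apply: (mulgI (F a)); rewrite -F_circ -Eb mulg1.
Qed.

Lemma card_fiber a : #|[set b | F b == F a]| = #|Ker|.
Proof. by rewrite fiber card_imset //; exact: circ_inj. Qed.

Lemma count_V : #|V| = (#|permGroup psi| * #|Ker|)%N.
Proof.
rewrite -[#|V|]sum1_card (partition_big F (mem (permGroup psi))) /=; last by move=> a _; exact: F_in.
rewrite -sum_nat_const; apply: eq_bigr => g Hg.
have [a <-] := F_surj Hg.
by rewrite -(card_fiber a) sum1_card cardE; apply/esym; rewrite cardE; congr size; apply: eq_enum => b; rewrite inE.
Qed.

Lemma card_V : #|V| = (m ^ n)%N.
Proof. by rewrite card_mx !card_ord mul1n. Qed.

Lemma G_dvd : (#|permGroup psi| %| m ^ n)%N.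
Proof. by rewrite -card_V count_V dvdn_mulr. Qed.

Lemma F0 : F 0%R = 1.
Proof.
have -> : (0%R : V) = red (vw [::]) by apply/rowP => i; apply: val_inj; rewrite !mxE ffunE.
by rewrite F_vw.
Qed.

Lemma circ_ker k1 k2 : F k1 = 1 -> circ k1 k2 = (k1 + k2)%R.
Proof.
move=> H; apply/rowP => i; apply: val_inj.
by rewrite /circ !mxE !ffunE H perm1 /=.
Qed.

Lemma ker_group : group_set Ker.
Proof.
apply/group_setP; split; first by rewrite inE -[1%g]/(0%R : V) F0.
move=> x y; rewrite !inE => /eqP Fx /eqP Fy.
by rewrite -[(x * y)%g]/(x + y)%R -circ_ker // F_circ Fx Fy mulg1.
Qed.
Lemma m_dvd (Hmin : forall d0, (0 < d0)%N -> (d0 < m)%N -> exists s, psik psi d0 s != 1) :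
  (m %| #|permGroup psi|)%N.
Proof.
pose K := Group ker_group.
have nK : [set: V] \subset 'N(K).
  by apply: sub_abelian_norm; [exact: FinRing.zmod_abelian | exact: subsetT].
have Kpos : (0 < #|K|)%N by apply/card_gt0P; exists 1%g; exact: group1.
have cardG : #|permGroup psi| = #|([set: V] / K)%g|.
  rewrite card_quotient //; have := Lagrange (subsetT K).
  rewrite cardsT count_V /= => H; apply/eqP.
  by rewrite -(eqn_pmul2l Kpos) H mulnC.
pose e s : V := red [ffun i => ((i == s) : nat)].
have eX k s : (e s ^+ k)%g = red (vw (Wk psi k s)).
  rewrite vw_Wk; elim: k => [|k IH].
    by rewrite expg0; apply/rowP => i; apply: val_inj; rewrite !mxE !ffunE.
  rewrite expgS IH; apply/rowP => i; apply: val_inj.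
  rewrite -[(_ * _)%g]/(_ + _)%R !mxE /= !ffunE /= modnDm mulSn.
  by [].
have eN s : e s \in 'N(K) by apply: (subsetP nK); rewrite inE.
have o_dvd s : (#[coset K (e s)]%g %| #|([set: V] / K)%g|)%N.
  by apply: order_dvdG; apply: mem_quotient; rewrite inE.
have inK k s : red (vw (Wk psi k s)) \in K = (psik psi k s == 1).
  by rewrite inE /= F_vw pw_Wk.
have o_m s : (#[coset K (e s)]%g %| m)%N.
  rewrite order_dvdn -morphX //; apply/eqP; apply: coset_id.
  by rewrite eX inK Hcl.
have o_K s k : (#[coset K (e s)]%g %| k)%N -> psik psi k s = 1.
  case/dvdnP => q ->; apply/eqP; rewrite -inK -eX mulnC expgM groupX //.
  apply: coset_idr; first exact: groupX.
  by rewrite (morphX _ _ (eN s)) expg_order.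
pose L := (\big[lcmn/1%N]_(s < n) #[coset K (e s)]%g)%N.
have Lm : (L %| m)%N by apply/dvdn_biglcmP => s _; exact: o_m.
have LG : (L %| #|([set: V] / K)%g|)%N by apply/dvdn_biglcmP => s _; exact: o_dvd.
have Lpos : (0 < L)%N by apply: dvdn_gt0 Lm.
have psiL s : psik psi L s = 1 by apply: o_K; apply: (biglcmn_sup s) => //.
have -> : m = L.
  case: (ltnP L m) => [lt|ge].
    by have [s /eqP []] := Hmin L Lpos lt.
  by apply/eqP; rewrite eqn_leq ge dvdn_leq.
by rewrite cardG.
Qed.

End Main.

Section Germ.
Variables (n : nat) (psi : 'I_n -> {perm 'I_n}) (z : algC).
Hypothesis z0 : z != 0%R.
Local Open Scope ring_scope.

Definition mono (M : 'M[algC]_n) (s : {perm 'I_n}) :=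
  forall i j, (M i j != 0) = (j == s i).

Lemma mono1 : mono 1%:M 1%g.
Proof.
move=> i j; rewrite mxE perm1 [j == i]eq_sym.
by case: (i == j); rewrite /= ?oner_eq0 ?eqxx.
Qed.

Lemma mono0 (M : 'M[algC]_n) s i j : mono M s -> j != s i -> M i j = 0.
Proof. by move=> h nj; apply/eqP; move: (h i j); rewrite (negbTE nj) => /negbFE. Qed.

Lemma mono_mul A B s t : mono A s -> mono B t -> mono (A *m B) (s * t)%g.
Proof.
move=> hA hB i k; rewrite mxE (bigD1 (s i)) //= big1 ?addr0; last first.
  by move=> j nj; rewrite (mono0 hA nj) mul0r.
by rewrite mulf_eq0 negb_or hA eqxx hB permM.
Qed.

Lemma mono_inv A s : mono A s -> A \in unitmx -> mono (invmx A) (s^-1)%g.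
Proof.
move=> hA uA i j.
have := congr1 (fun M : 'M[algC]_n => M i (s j)) (mulVmx uA).
rewrite /= mxE (bigD1 j) //= big1 ?addr0; last first.
  move=> j' nj; rewrite (mono0 hA) ?mulr0 //.
  by rewrite (inj_eq perm_inj) eq_sym.
rewrite mxE => H.
have Ha : A j (s j) != 0 by rewrite hA.
have -> : (invmx A i j != 0) = (invmx A i j * A j (s j) != 0).
  by rewrite mulf_eq0 negb_or Ha andbT.
rewrite H pnatr_eq0 eqb0 negbK.
by rewrite -[RHS](inj_eq (@perm_inj _ s)) permKV eq_sym.
Qed.

Lemma Pmx_perm (s : {perm 'I_n}) : Pmx s = perm_mx s.
Proof. by apply/matrixP => i j; rewrite !mxE eq_sym; case: (s i == j). Qed.

Lemma mono_gen i : mono (germGen psi z i) (psi i).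
Proof.
move=> k j; rewrite /germGen mul_diag_mx !mxE.
have r0 : (if k == i then z else 1) != 0 by case: (k == i); rewrite ?oner_eq0.
by rewrite mulf_eq0 negb_or r0 /=; case: (j == psi i k); rewrite ?oner_eq0 ?eqxx.
Qed.

Lemma unit_gen i : germGen psi z i \in unitmx.
Proof.
rewrite unitmxE unitfE /germGen det_mulmx det_diag Pmx_perm det_perm.
rewrite mulf_neq0 ?signr_eq0 //; apply/prodf_neq0 => k _; rewrite mxE.
by case: (k == i); rewrite ?oner_eq0.
Qed.

Lemma mono_piW w : mono (piW psi z w) (psiW psi w).
Proof.
elim: w => [|[i b] w IH] /=; first exact: mono1.
apply: mono_mul => //; case: b; first exact: mono_gen.
by apply: mono_inv; [exact: mono_gen | exact: unit_gen].
Qed.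

Definition phiM (M : 'M[algC]_n) : {perm 'I_n} :=
  odflt 1%g [pick s : {perm 'I_n} | [forall i, M i (s i) != 0]].

Lemma phiM_mono M s : mono M s -> phiM M = s.
Proof.
move=> h; rewrite /phiM; case: pickP => [t /forallP Ht|H] /=.
  by apply/permP => i; move: (Ht i); rewrite h => /eqP.
by move: (H s); apply: contraFeq => _; apply/forallP => i; rewrite h.
Qed.

End Germ.

Lemma psik_apply n (psi : 'I_n -> {perm 'I_n}) k s : psik psi k s s = iter k (diagT psi) s.
Proof.
elim: k s => [|k IH] s; first by rewrite /psik big_ord0 perm1.
rewrite -pw_Wk [Wk _ _ _]/= pw_cons pw_Wk permM.
by rewrite -[psi s s]/(diagT psi s) IH iterSr.
Qed.

Theorem mainTheorem5 (n : nat) (psi : 'I_n -> {perm 'I_n}) (d : nat)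
  (z : algC) :
  is_cycle_set psi -> is_class psi d -> (d.-primitive_root z)%R ->
  (* (i) psi factors through pi *)
  (exists phi : 'M[algC]_n -> {perm 'I_n},
      forall w : word n, phi (piW psi z w) = psiW psi w) /\
  (* (ii) *)
  (exists Tp : {perm 'I_n},
      (forall s, Tp s = diagT psi s) /\ (#[Tp]%g %| d)%N) /\
  (d %| #|permGroup psi|)%N /\ (#|permGroup psi| %| d ^ n)%N.
Proof.
move=> Hcs [Hd [Hcl Hmin]] Hz.
have z0 : z != 0%R.
  apply/eqP => zz; move: (prim_expr_order Hz); rewrite zz expr0n eqn0Ngt Hd /=.
  by move/eqP; rewrite eq_sym oner_eq0.
split.
  by exists (@phiM n) => w; apply: phiM_mono; exact: mono_piW.
have Tid s : iter d (diagT psi) s = s by rewrite -psik_apply Hcl perm1.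
have Tinj : injective (diagT psi).
  move=> x y Exy; rewrite -(Tid x) -(Tid y).
  by rewrite -(prednK Hd) !iterSr Exy.
split.
  exists (perm Tinj); split; first by move=> s; rewrite permE.
  rewrite order_dvdn; apply/eqP/permP => x; rewrite permX perm1.
  rewrite -{2}(Tid x); elim: d {Hd Hcl Hmin Hz Tid} => //= k ->.
  by rewrite permE.
case: d Hd Hcl Hmin Hz Tid => // [] [|d'] _ Hcl Hmin _ _.
  have H1 : permGroup psi = 1%G.
    apply/val_inj/eqP; rewrite /= -subG1 /permGroup gen_subG.
    apply/subsetP => x /imsetP [s _ ->]; rewrite inE.
    by move: (Hcl s); rewrite /psik big_ord1 /= => ->.
  by rewrite H1 cards1 exp1n.
split; first exact: m_dvd.
exact: G_dvd.
Qed.
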